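(* Let $s\in[1/4,3/4]$, $\rho\ge2^{40}$, and let $g:(0,\infty)\to(0,\infty)$ be defined by $g(r):=\int_0^rg'(x)\,dx$, where $g'(r)=s\,r^{s-1}-s\rho^{s-1}$ for $r\in(0,\rho]$ and $g'(r)=0$ for $r\ge\rho$. Let $\lambda:[0,T]\to[0,1]$ be any function and define, for $v\in\mathbb{Z}\times\mathbb{R}$, $$B(t,v):=\langle v\rangle^3\exp[\lambda(t)g(\langle v\rangle)].$$ Then for all $t$ and $v,w\in\mathbb{Z}\times\mathbb{R}$, $$B(t,v+w)\lesssim B(t,v)B(t,w)\min(\langle v\rangle,\langle w\rangle)^{-3}.$$ Moreover, if $|v|\le|w|$ and $|w-v|\le|v|/4$, then $$|B(t,w)-B(t,v)|\lesssim[1+\lambda(t)g(\langle v\rangle)]\langle v\rangle^{-1}B(t,v)\cdot B(t,v-w)\langle v-w\rangle^{-2}.$$ The implicit constants are independent of $t$, $\lambda$, $s$, and $\rho$.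
   Context: $\langle v\rangle=(1+|v|^2)^{1/2}$ with $|v|$ the Euclidean norm of $v=(k,\xi)\in\mathbb{Z}\times\mathbb{R}\subset\mathbb{R}^2$. *)

(* Defs.v *)
From Stdlib Require Import Reals Lra.
Open Scope R_scope.

Definition ZR := (Z * R)%type.

Definition zr_add (v w : ZR) : ZR := ((fst v + fst w)%Z, snd v + snd w).
Definition zr_sub (v w : ZR) : ZR := ((fst v - fst w)%Z, snd v - snd w).

Definition zr_norm (v : ZR) : R := sqrt (IZR (fst v) ^ 2 + snd v ^ 2).
Definition jbr (v : ZR) : R := sqrt (1 + zr_norm v ^ 2).

Definition gprime (s rho r : R) : R :=
  if Rle_dec r rho then s * Rpower r (s - 1) - s * Rpower rho (s - 1) else 0.

(* g(r) = int_0^r g'(x) dx, computed in closed form: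
   r^s - s rho^{s-1} r for 0 < r <= rho, and (1-s) rho^s for r >= rho. *)
Definition gfun (s rho r : R) : R :=
  if Rle_dec r rho then Rpower r s - s * Rpower rho (s - 1) * r
  else Rpower rho s - s * Rpower rho (s - 1) * rho.

Definition Bw (s rho : R) (lam : R -> R) (t : R) (v : ZR) : R :=
  jbr v ^ 3 * exp (lam t * gfun s rho (jbr v)).

(* Main.v *)
Require Import Defs.
From Stdlib Require Import Reals Lra Psatz.
Open Scope R_scope.

Lemma exp_mono x y : x <= y -> exp x <= exp y.
Proof. intros H; destruct (Req_dec x y) as [->|]; [lra|]. left; apply exp_increasing; lra. Qed.

Lemma ln_mono a b : 0 < a <= b -> ln a <= ln b.
Proof. intros H; destruct (Req_dec a b) as [->|]; [lra|]. left; apply ln_increasing; lra. Qed.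

Lemma rpow_anti a b e : e <= 0 -> 0 < a <= b -> Rpower b e <= Rpower a e.
Proof.
  intros He Hab. unfold Rpower. apply exp_mono.
  assert (ln a <= ln b) by (apply ln_mono; lra). nra.
Qed.

Lemma rpow_pos a e : 0 < Rpower a e.
Proof. unfold Rpower; apply exp_pos. Qed.

Lemma rpow_split x s : 0 < x -> Rpower x s = x * Rpower x (s - 1).
Proof.
  intros Hx. replace s with (1 + (s-1)) at 1 by ring.
  rewrite Rpower_plus, Rpower_1; auto.
Qed.

Lemma mv s x y : 0 < s < 1 -> 0 < x <= y ->
  s * Rpower y (s-1) * (y - x) <= Rpower y s - Rpower x s <= s * Rpower x (s-1) * (y - x).
Proof.
  intros Hs Hxy. destruct (Req_dec x y) as [->|Hne].
  - split; lra.
  - destruct (MVT_cor2 (fun z => Rpower z s) (fun z => s * Rpower z (s - 1)) x y)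
      as [c [Hc1 Hc2]]; [lra| |].
    + intros c Hc. apply derivable_pt_lim_power. lra.
    + simpl in Hc1. rewrite Hc1.
      assert (Rpower y (s-1) <= Rpower c (s-1)) by (apply rpow_anti; lra).
      assert (Rpower c (s-1) <= Rpower x (s-1)) by (apply rpow_anti; lra).
      assert (0 < y - x) by lra. split; [apply Rmult_le_compat_r; [lra|]; apply Rmult_le_compat_l; lra | apply Rmult_le_compat_r; [lra|]; apply Rmult_le_compat_l; lra].
Qed.

Section G.
Variables s rho : R.
Hypothesis Hs : 1/4 <= s <= 3/4.
Hypothesis Hrho : 1 <= rho.
Let k := s * Rpower rho (s-1).
Let M := Rpower rho s - k * rho.

Lemma g_le r : r <= rho -> gfun s rho r = Rpower r s - k * r.
Proof. intros H; unfold gfun; destruct (Rle_dec r rho); [reflexivity|lra]. Qed.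

Lemma g_ge r : rho <= r -> gfun s rho r = M.
Proof. intros H; unfold gfun; destruct (Rle_dec r rho); [|reflexivity].
  assert (r = rho) by lra. subst r. reflexivity. Qed.

Lemma M_eq : M = (1 - s) * Rpower rho s.
Proof. unfold M, k. rewrite (rpow_split rho s) by lra. ring. Qed.

Lemma g_lower r : 0 < r <= rho -> (1 - s) * Rpower r s <= gfun s rho r.
Proof.
  intros Hr. rewrite g_le by lra. unfold k.
  assert (Rpower rho (s-1) <= Rpower r (s-1)) by (apply rpow_anti; lra).
  rewrite (rpow_split r s) by lra.
  assert (s*r*Rpower rho (s-1) <= s*r*Rpower r (s-1)) by (apply Rmult_le_compat_l; nra).
  lra.
Qed.

Lemma g_nonneg r : 0 < r -> 0 <= gfun s rho r.
Proof.
  intros Hr. destruct (Rle_dec r rho).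
  - assert (H := g_lower r ltac:(lra)). assert (0 < Rpower r s) by apply rpow_pos. nra.
  - rewrite g_ge by lra. rewrite M_eq. assert (0 < Rpower rho s) by apply rpow_pos. nra.
Qed.

Lemma g_mono0 x y : 0 < x <= y -> y <= rho -> gfun s rho x <= gfun s rho y.
Proof.
  intros Hxy Hy. rewrite !g_le by lra. unfold k.
  destruct (mv s x y ltac:(lra) Hxy) as [H1 _].
  assert (Rpower rho (s-1) <= Rpower y (s-1)) by (apply rpow_anti; lra).
  assert (s*(y-x)*Rpower rho (s-1) <= s*(y-x)*Rpower y (s-1)) by (apply Rmult_le_compat_l; nra).
  lra.
Qed.

Lemma g_M r : 0 < r -> gfun s rho r <= M.
Proof.
  intros Hr. destruct (Rle_dec r rho).
  - rewrite <- (g_ge rho) by lra. apply g_mono0; lra.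
  - rewrite g_ge by lra. lra.
Qed.

Lemma g_mono x y : 0 < x <= y -> gfun s rho x <= gfun s rho y.
Proof.
  intros Hxy. destruct (Rle_dec y rho).
  - apply g_mono0; lra.
  - rewrite (g_ge y) by lra. apply g_M; lra.
Qed.

Lemma subadd a b : 0 < a -> 0 < b -> Rpower (a + b) s <= Rpower a s + Rpower b s.
Proof.
  intros Ha Hb. rewrite (rpow_split (a+b)), (rpow_split a), (rpow_split b) by lra.
  assert (Rpower (a+b) (s-1) <= Rpower a (s-1)) by (apply rpow_anti; lra).
  assert (Rpower (a+b) (s-1) <= Rpower b (s-1)) by (apply rpow_anti; lra).
  nra.
Qed.

Lemma g_sub0 a b : 0 < a -> 0 < b -> a + b <= rho ->
  gfun s rho (a + b) <= gfun s rho a + gfun s rho b.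
Proof.
  intros Ha Hb Hab. rewrite !g_le by lra.
  assert (H := subadd a b Ha Hb). lra.
Qed.

Lemma g_sub a b c : 0 < a -> 0 < b -> 0 < c <= a + b ->
  gfun s rho c <= gfun s rho a + gfun s rho b.
Proof.
  intros Ha Hb Hc.
  assert (gfun s rho c <= gfun s rho (a + b)) by (apply g_mono; lra).
  assert (0 <= gfun s rho a) by (apply g_nonneg; lra).
  assert (0 <= gfun s rho b) by (apply g_nonneg; lra).
  destruct (Rle_dec rho a).
  { rewrite (g_ge a) by lra. assert (H2 := g_M c ltac:(lra)). lra. }
  destruct (Rle_dec rho b).
  { rewrite (g_ge b) by lra. assert (H2 := g_M c ltac:(lra)). lra. }
  destruct (Rle_dec (a + b) rho).
  { assert (H2 := g_sub0 a b Ha Hb ltac:(lra)). lra. }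
  assert (H2 := g_M c ltac:(lra)).
  assert (H3 := g_sub0 a (rho - a) Ha ltac:(lra) ltac:(lra)).
  replace (a + (rho - a)) with rho in H3 by ring.
  rewrite (g_ge rho) in H3 by lra.
  assert (gfun s rho (rho - a) <= gfun s rho b) by (apply g_mono; lra).
  lra.
Qed.

Lemma g_diff a b : 1 <= a <= b ->
  a * (gfun s rho b - gfun s rho a) <= 4 * gfun s rho a * (b - a).
Proof.
  intros Hab.
  destruct (Rle_dec rho a).
  { rewrite !g_ge by lra. assert (0 <= M) by (rewrite M_eq; assert (0 < Rpower rho s) by apply rpow_pos; nra).
    apply Rle_trans with 0; [right; ring | apply Rmult_le_pos; lra]. }
  apply Rnot_le_lt in n.
  assert (Hex : exists b', a <= b' <= b /\ b' <= rho /\ gfun s rho b = gfun s rho b').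
  { destruct (Rle_dec b rho). exists b; split; [lra|split; [lra|reflexivity]].
    exists rho; split; [lra|split; [lra|]]. rewrite !g_ge by lra; reflexivity. }
  destruct Hex as [b' [Hb'1 [Hb'2 E]]].
  rewrite E.
  rewrite !(g_le a), (g_le b') by lra.
  destruct (mv s a b' ltac:(lra) ltac:(lra)) as [_ H2].
  assert (Hl := g_lower a ltac:(lra)). rewrite g_le in Hl by lra.
  unfold k in *.
  assert (0 < Rpower rho (s-1)) by apply rpow_pos.
  assert (0 < Rpower a (s-1)) by apply rpow_pos.
  assert (Ha : Rpower a s = a * Rpower a (s-1)) by (apply rpow_split; lra).
  rewrite Ha in Hl |- *.
  (* a*(b'^s - a^s - k(b'-a)) <= a * s a^{s-1} (b'-a) = s a^s (b'-a) <= 4(1-s) a^s (b - a) *)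
  assert (a * (Rpower b' s - a * Rpower a (s - 1)) <= a * (s * Rpower a (s-1) * (b' - a))) by
    (apply Rmult_le_compat_l; lra).
  assert (0 <= a * Rpower a (s-1)) by nra.
  set (P := a * Rpower a (s-1)) in *.
  set (K := s * Rpower rho (s-1)) in *.
  assert (0 <= K) by (unfold K; nra).
  assert (0 <= a * K * (b' - a)) by (apply Rmult_le_pos; [nra|lra]).
  assert (4 * ((1-s)*P) * (b-a) <= 4 * (P - K * a) * (b - a)) by (apply Rmult_le_compat_r; lra).
  assert (s * P * (b' - a) <= s * P * (b - a)) by (apply Rmult_le_compat_l; nra).
  assert (0 <= P * (b - a)) by (apply Rmult_le_pos; lra).
  assert (a * (s * Rpower a (s - 1) * (b' - a)) = s * P * (b' - a)) by (unfold P; ring).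
  nra.
Qed.

End G.

Lemma sq_tri x1 y1 x2 y2 :
  sqrt ((x1+x2)^2 + (y1+y2)^2) <= sqrt (x1^2+y1^2) + sqrt (x2^2+y2^2).
Proof.
  assert (Hc := sqrt_cauchy x1 y1 x2 y2). unfold Rsqr in Hc.
  set (A := sqrt (x1^2+y1^2)). set (B := sqrt (x2^2+y2^2)).
  assert (HA : A*A = x1^2+y1^2) by (apply sqrt_sqrt; nra).
  assert (HB : B*B = x2^2+y2^2) by (apply sqrt_sqrt; nra).
  replace (x1*x1+y1*y1) with (x1^2+y1^2) in Hc by ring.
  replace (x2*x2+y2*y2) with (x2^2+y2^2) in Hc by ring.
  fold A B in Hc.
  assert (0 <= A) by apply sqrt_pos. assert (0 <= B) by apply sqrt_pos.
  rewrite <- (sqrt_square (A + B)) by lra.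
  apply sqrt_le_1_alt. nra.
Qed.

Lemma jb_ge1 n : 1 <= sqrt (1 + n^2).
Proof. rewrite <- sqrt_1 at 1. apply sqrt_le_1_alt. nra. Qed.

Lemma jb_ge n : 0 <= n -> n <= sqrt (1 + n^2).
Proof. intros. rewrite <- (sqrt_square n) at 1 by lra. apply sqrt_le_1_alt. nra. Qed.

Lemma jb_sq n : sqrt (1 + n^2) * sqrt (1 + n^2) = 1 + n^2.
Proof. apply sqrt_sqrt. nra. Qed.

Lemma jb_add m n : 0 <= m -> 0 <= n -> sqrt (1 + (m+n)^2) <= sqrt (1+m^2) + sqrt (1+n^2).
Proof.
  intros Hm Hn.
  assert (H1 := jb_ge m Hm). assert (H2 := jb_ge n Hn).
  assert (H3 := jb_ge1 m). assert (H4 := jb_ge1 n).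
  assert (H5 := jb_sq m). assert (H6 := jb_sq n).
  set (A := sqrt (1+m^2)) in *. set (B := sqrt (1+n^2)) in *.
  rewrite <- (sqrt_square (A + B)) by lra.
  apply sqrt_le_1_alt. nra.
Qed.

Lemma jb_mono m n : 0 <= m <= n -> sqrt (1+m^2) <= sqrt (1+n^2).
Proof. intros. apply sqrt_le_1_alt. nra. Qed.

Lemma jb_diff m n : 0 <= m <= n -> sqrt (1+n^2) - sqrt (1+m^2) <= n - m.
Proof.
  intros H.
  assert (H1 := jb_ge m ltac:(lra)). assert (H2 := jb_ge n ltac:(lra)).
  assert (H3 := jb_ge1 m). assert (H4 := jb_ge1 n).
  assert (H5 := jb_sq m). assert (H6 := jb_sq n).
  assert (H7 := jb_mono m n H).
  set (A := sqrt (1+m^2)) in *. set (B := sqrt (1+n^2)) in *.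
  assert ((B - A) * (B + A) = (n - m) * (n + m)) by nra.
  assert ((n - m) * (n + m) <= (n - m) * (B + A)) by (apply Rmult_le_compat_l; lra).
  nra.
Qed.

Lemma zn_nonneg v : 0 <= zr_norm v.
Proof. apply sqrt_pos. Qed.

Lemma jbr_eq v : jbr v = sqrt (1 + zr_norm v ^ 2).
Proof. reflexivity. Qed.

Lemma zn_add v w : zr_norm (zr_add v w) <= zr_norm v + zr_norm w.
Proof.
  destruct v as [k1 x1], w as [k2 x2]. unfold zr_norm, zr_add; simpl.
  rewrite plus_IZR. apply sq_tri.
Qed.

Lemma zn_sub_sym v w : zr_norm (zr_sub v w) = zr_norm (zr_sub w v).
Proof.
  destruct v as [k1 x1], w as [k2 x2]. unfold zr_norm, zr_sub; simpl.
  rewrite !minus_IZR. f_equal. ring.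
Qed.

Lemma zn_tri2 v w : zr_norm w <= zr_norm v + zr_norm (zr_sub w v).
Proof.
  destruct v as [k1 x1], w as [k2 x2]. unfold zr_norm, zr_sub; simpl.
  rewrite !minus_IZR.
  assert (H := sq_tri (IZR k1) x1 (IZR k2 - IZR k1) (x2 - x1)).
  replace (IZR k1 + (IZR k2 - IZR k1)) with (IZR k2) in H by ring.
  replace (x1 + (x2 - x1)) with x2 in H by ring. exact H.
Qed.

Lemma part1 a b c X Y Z : 1 <= a -> 1 <= b -> 0 < c <= a + b -> Z <= X + Y ->
  c^3 * exp Z <= 8 * (a^3 * exp X * (b^3 * exp Y) / Rmin a b ^ 3).
Proof.
  intros Ha Hb Hc HZ.
  assert (E : exp Z <= exp X * exp Y) by (rewrite <- exp_plus; apply exp_mono; lra).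
  assert (0 < exp X) by apply exp_pos. assert (0 < exp Y) by apply exp_pos.
  assert (0 < exp Z) by apply exp_pos.
  assert (Hm : exists m, Rmin a b = m /\ c <= 2 * m * 0 + 2 * Rmax a b /\
     a^3 * b^3 / m^3 = Rmax a b ^ 3).
  { unfold Rmin, Rmax. destruct (Rle_dec a b).
    - exists a. split; [reflexivity|]. split; [lra|]. field. lra.
    - exists b. split; [reflexivity|]. split; [lra|]. field. lra. }
  destruct Hm as [m [-> [Hcm Hq]]].
  assert (1 <= Rmax a b) by (apply Rle_trans with a; [lra|apply Rmax_l]).
  set (Mx := Rmax a b) in *.
  replace (a ^ 3 * exp X * (b ^ 3 * exp Y) / m ^ 3) with (a^3*b^3/m^3 * (exp X * exp Y))
    by (unfold Rdiv; ring).
  rewrite Hq.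
  assert (c^3 <= (2*Mx)^3) by (apply pow_incr; lra).
  assert (c^3 * exp Z <= (2*Mx)^3 * (exp X * exp Y)).
  { apply Rmult_le_compat; try lra. apply pow_le; lra. }
  lra.
Qed.

Lemma expdiff X Y : X <= Y -> exp Y - exp X <= (Y - X) * exp Y.
Proof.
  intros H. assert (H1 := exp_ineq1_le (X - Y)).
  assert (0 < exp Y) by apply exp_pos.
  replace (exp X) with (exp (X - Y) * exp Y) by (rewrite <- exp_plus; f_equal; ring).
  nra.
Qed.

Lemma part2 a b d X Y Z : 1 <= a <= b -> b <= a + a/4 -> b - a <= d -> 1 <= d ->
  0 <= X -> X <= Y -> Y <= X + Z -> 0 <= Z -> a * (Y - X) <= 4 * X * (b - a) ->
  Rabs (b^3 * exp Y - a^3 * exp X) <= 8 * ((1 + X) / a * (a^3 * exp X) * (d^3 * exp Z / d^2)).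
Proof.
  intros Hab Hb Hd Hd1 HX HXY HYZ HZ Hdiff.
  assert (0 < exp X) by apply exp_pos. assert (0 < exp Y) by apply exp_pos.
  assert (0 < exp Z) by apply exp_pos.
  assert (EY : exp Y <= exp X * exp Z) by (rewrite <- exp_plus; apply exp_mono; lra).
  assert (EXY : exp X <= exp Y) by (apply exp_mono; lra).
  assert (a^3 <= b^3) by (apply pow_incr; lra).
  assert (a^3 * exp X <= b^3 * exp Y) by (apply Rmult_le_compat; try lra; apply pow_le; lra).
  rewrite Rabs_pos_eq by lra.
  replace (8 * ((1 + X) / a * (a ^ 3 * exp X) * (d ^ 3 * exp Z / d ^ 2)))
    with (8 * (1 + X) * a^2 * d * (exp X * exp Z)) by (field; lra).
  set (W := exp X * exp Z) in *.
  assert (HD := expdiff X Y HXY).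
  (* b^3 eY - a^3 eX = (b^3-a^3) eY + a^3 (eY - eX) *)
  assert (T1 : (b^3 - a^3) * exp Y <= 4 * a^2 * d * W).
  { assert (b^3 - a^3 <= 4 * a^2 * d).
    { replace (b^3 - a^3) with ((b - a) * (b^2 + a*b + a^2)) by ring.
      assert (b^2 + a*b + a^2 <= 4 * a^2) by nra.
      assert (0 <= b - a) by lra.
      apply Rle_trans with ((b-a) * (4*a^2)). apply Rmult_le_compat_l; nra.
      apply Rle_trans with (d * (4 * a^2)). apply Rmult_le_compat_r; nra. lra. }
    apply Rle_trans with ((4 * a^2 * d) * exp Y). apply Rmult_le_compat_r; lra.
    apply Rmult_le_compat_l; [nra|lra]. }
  assert (T2 : a^3 * (exp Y - exp X) <= 4 * X * a^2 * d * W).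
  { assert (a * (Y - X) <= 4 * X * d) by (apply Rle_trans with (4 * X * (b - a)); [lra|]; nra).
    apply Rle_trans with (a^3 * ((Y - X) * exp Y)). apply Rmult_le_compat_l; [nra|lra].
    replace (a ^ 3 * ((Y - X) * exp Y)) with (a^2 * (a * (Y - X)) * exp Y) by ring.
    apply Rle_trans with (a^2 * (4 * X * d) * exp Y).
    apply Rmult_le_compat_r; [lra|]. apply Rmult_le_compat_l; nra.
    replace (4 * X * a ^ 2 * d * W) with (a^2 * (4 * X * d) * W) by ring.
    apply Rmult_le_compat_l; [|lra]. apply Rmult_le_pos; [apply pow_le; lra|]. apply Rmult_le_pos; lra. }
  replace (b ^ 3 * exp Y - a ^ 3 * exp X) with ((b^3 - a^3) * exp Y + a^3 * (exp Y - exp X)) by ring.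
  replace (8 * (1 + X) * a ^ 2 * d * W) with (2 * (4 * a^2 * d * W + 4 * X * a^2 * d * W)) by ring.
  assert (0 <= 4 * a^2 * d * W + 4 * X * a^2 * d * W).
  { assert (0 <= a^3 * (exp Y - exp X)) by (apply Rmult_le_pos; [apply pow_le|]; lra).
    assert (0 <= (b^3 - a^3) * exp Y) by (apply Rmult_le_pos; lra). lra. }
  lra.
Qed.

Theorem lemmaA3 :
  exists C : R, 0 < C /\
  forall (s rho T : R) (lam : R -> R),
    1/4 <= s <= 3/4 ->
    2 ^ 40 <= rho ->
    (forall t, 0 <= t <= T -> 0 <= lam t <= 1) ->
    forall (t : R) (v w : ZR), 0 <= t <= T ->
      Bw s rho lam t (zr_add v w)
        <= C * (Bw s rho lam t v * Bw s rho lam t w / Rmin (jbr v) (jbr w) ^ 3)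
      /\
      (zr_norm v <= zr_norm w -> zr_norm (zr_sub w v) <= zr_norm v / 4 ->
       Rabs (Bw s rho lam t w - Bw s rho lam t v)
         <= C * ((1 + lam t * gfun s rho (jbr v)) / jbr v * Bw s rho lam t v
                 * (Bw s rho lam t (zr_sub v w) / jbr (zr_sub v w) ^ 2))).
Proof.
  exists 8. split; [lra|].
  intros s rho T lam Hs Hrho Hlam t v w Ht.
  assert (Hr : 1 <= rho) by (apply Rle_trans with (2^40); [apply pow_R1_Rle; lra|lra]).
  destruct (Hlam t Ht) as [HL0 HL1].
  set (L := lam t) in *.
  assert (Hnv := zn_nonneg v). assert (Hnw := zn_nonneg w).
  assert (Ha := jb_ge1 (zr_norm v)). assert (Hb := jb_ge1 (zr_norm w)).
  rewrite <- jbr_eq in Ha, Hb.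
  unfold Bw; fold L.
  split.
  - assert (Hc1 := jb_ge1 (zr_norm (zr_add v w))). rewrite <- jbr_eq in Hc1.
    apply part1; try lra.
    + split; [lra|]. rewrite !jbr_eq.
      apply Rle_trans with (sqrt (1 + (zr_norm v + zr_norm w)^2)).
      * apply jb_mono. split; [apply zn_nonneg| apply zn_add].
      * apply jb_add; lra.
    + assert (jbr (zr_add v w) <= jbr v + jbr w).
      { rewrite !jbr_eq.
        apply Rle_trans with (sqrt (1 + (zr_norm v + zr_norm w)^2)).
        * apply jb_mono. split; [apply zn_nonneg| apply zn_add].
        * apply jb_add; lra. }
      rewrite <- Rmult_plus_distr_l. apply Rmult_le_compat_l; [lra|].
      apply g_sub; lra.
  - intros Hvw Hwv.
    assert (Hd1 := jb_ge1 (zr_norm (zr_sub v w))). rewrite <- jbr_eq in Hd1.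
    assert (Hab : jbr v <= jbr w) by (rewrite !jbr_eq; apply jb_mono; lra).
    assert (Hba : jbr w - jbr v <= zr_norm (zr_sub w v)).
    { rewrite !jbr_eq. apply Rle_trans with (zr_norm w - zr_norm v).
      apply jb_diff; lra. assert (H := zn_tri2 v w). lra. }
    assert (Hva : zr_norm v <= jbr v) by (rewrite jbr_eq; apply jb_ge; lra).
    assert (Hdd : zr_norm (zr_sub v w) <= jbr (zr_sub v w)) by (rewrite jbr_eq; apply jb_ge; apply zn_nonneg).
    rewrite (zn_sub_sym v w) in Hdd.
    assert (Hga := g_nonneg s rho Hs Hr (jbr v) ltac:(lra)).
    assert (Hgd := g_nonneg s rho Hs Hr (jbr (zr_sub v w)) ltac:(lra)).
    assert (0 <= L * gfun s rho (jbr v)) by (apply Rmult_le_pos; lra).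
    assert (0 <= L * gfun s rho (jbr (zr_sub v w))) by (apply Rmult_le_pos; lra).
    assert (L * gfun s rho (jbr v) <= L * gfun s rho (jbr w)).
    { apply Rmult_le_compat_l; [lra|]. apply g_mono; lra. }
    assert (L * gfun s rho (jbr w) <= L * gfun s rho (jbr v) + L * gfun s rho (jbr (zr_sub v w))).
    { rewrite <- Rmult_plus_distr_l. apply Rmult_le_compat_l; [lra|].
      apply g_sub; lra. }
    assert (jbr v * (L * gfun s rho (jbr w) - L * gfun s rho (jbr v)) <=
            4 * (L * gfun s rho (jbr v)) * (jbr w - jbr v)).
    { assert (Hgdf := g_diff s rho Hs Hr (jbr v) (jbr w) ltac:(lra)).
      replace (jbr v * (L * gfun s rho (jbr w) - L * gfun s rho (jbr v)))
        with (L * (jbr v * (gfun s rho (jbr w) - gfun s rho (jbr v)))) by ring.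
      replace (4 * (L * gfun s rho (jbr v)) * (jbr w - jbr v))
        with (L * (4 * gfun s rho (jbr v) * (jbr w - jbr v))) by ring.
      apply Rmult_le_compat_l; lra. }
    apply part2; lra.
Qed.
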